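(* Let $((A, \cdot), N)$ be a Nijenhuis algebra. Then the infinitesimal $(\mu_1, N_1)$ of any formal deformation of the Nijenhuis algebra $((A, \cdot), N)$ is a $2$-cocycle in the cochain complex $\{ \oplus_{n \geq 0} C^n_{\mathrm{NAlg}} ((A, N)), \delta_{\mathrm{NAlg}} \}$. Moreover, the cohomology class of the corresponding $2$-cocycle depends only on the equivalence class of the formal deformation.
   Context: Work over a field $\mathbf{k}$ of characteristic $0$. A Nijenhuis algebra $((A,\cdot),N)$ is an associative algebra $(A,\cdot)$ with a linear map $N:A\to A$ satisfying $N(a)\cdot N(b) = N(N(a)\cdot b + a\cdot N(b) - N(a\cdot b))$ for all $a,b\in A$. Write $\mu(a,b)=a\cdot b$. Formal deformation: formal sums $\mu_t=\sum_{i\ge 0} t^i\mu_i \in \mathrm{Hom}(A^{\otimes 2},A)[[t]]$ with $\mu_0=\mu$ and $N_t=\sum_{i\ge0} t^i N_i\in \mathrm{Hom}(A,A)[[t]]$ with $N_0=N$ such that $(A[[t]],\mu_t)$ is an associative algebra over $\mathbf{k}[[t]]$ and the $\mathbf{k}[[t]]$-linear extension $N_t$ is a Nijenhuis operator on it. The pair $(\mu_1,N_1)$ is called its infinitesimal. Two formal deformations $((A[[t]],\mu_t),N_t)$ and $((A[[t]],\mu'_t),N'_t)$ are equivalent if there is a $\mathbf{k}[[t]]$-linear map $\varphi_t=\sum_{i\ge0}t^i\varphi_i$, $\varphi_i\in\mathrm{Hom}(A,A)$, $\varphi_0=\mathrm{Id}_A$, with $\varphi_t(\mu_t(a,b))=\mu'_t(\varphi_t(a),\varphi_t(b))$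 and $\varphi_t\circ N_t=N'_t\circ\varphi_t$. The cochain complex: $C^0_{\mathrm{NAlg}}((A,N))=0$, $C^1_{\mathrm{NAlg}}((A,N))=\mathrm{Hom}(A,A)$, and $C^n_{\mathrm{NAlg}}((A,N))=\mathrm{Hom}(A^{\otimes n},A)\oplus\mathrm{Hom}(A^{\otimes n-1},A)$ for $n\ge2$, with $\delta_{\mathrm{NAlg}}(f)=(\delta_{\mathrm{Hoch}}(f),-\partial^N(f))$ for $f\in C^1$ and $\delta_{\mathrm{NAlg}}(\chi,F)=(\delta_{\mathrm{Hoch}}(\chi),\, d_N(F)+(-1)^n\partial^N(\chi))$ for $(\chi,F)\in C^n$, $n\ge2$. Here, for $f\in\mathrm{Hom}(A^{\otimes n},A)$: - $\delta_{\mathrm{Hoch}}$ is the Hochschild coboundary: $(\delta_{\mathrm{Hoch}}f)(a_1,\dots,a_{n+1})=a_1\cdot f(a_2,\dots,a_{n+1})+\sum_{i=1}^n(-1)^i f(a_1,\dots,a_i\cdot a_{i+1},\dots,a_{n+1})+(-1)^{n+1}f(a_1,\dots,a_n)\cdot a_{n+1}$; - $(d_Nf)(a_1,\dots,a_{n+1})=N(a_1)\cdot f(a_2,\dots,a_{n+1})-(-1)^n f(a_1,\dots,a_n)\cdot N(a_{n+1})+\sum_{i=1}^n(-1)^i f(a_1,\dots,a_{i-1},N(a_i)\cdot a_{i+1}+a_i\cdot N(a_{i+1})-N(a_i\cdot a_{i+1}),\dots,a_{n+1}) - N\big((\delta_{\mathrm{Hoch}}f)(a_1,\dots,a_{n+1})\big)$;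 - $\partial^N(f)(a_1,\dots,a_n)=f(N(a_1),\dots,N(a_n))-\sum_{i}N\big(f(N(a_1),\dots,a_i,\dots,N(a_n))\big)+\sum_{i<j}N^2\big(f(N(a_1),\dots,a_i,\dots,a_j,\dots,N(a_n))\big)-\cdots+(-1)^nN^n(f(a_1,\dots,a_n))$ (the $k$-th sum runs over choices of $k$ arguments left without $N$, with $N^k$ applied outside and sign $(-1)^k$). $(\delta_{\mathrm{NAlg}})^2=0$; its cohomology is $H^\bullet_{\mathrm{NAlg}}((A,N))$. *)

(* Defs.v *)
From HB Require Import structures.
From mathcomp Require Import all_boot all_order all_algebra.
Set Implicit Arguments. Unset Strict Implicit. Unset Printing Implicit Defensive.
Import GRing.Theory.
Local Open Scope ring_scope.

Section NijenhuisDefs.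
Variables (k : fieldType) (A : lmodType k).

Definition is_lin (f : A -> A) : Prop :=
  forall (c : k) (x y : A), f (c *: x + y) = c *: f x + f y.

Definition is_bilin (m : A -> A -> A) : Prop :=
  (forall (c : k) (x y z : A), m (c *: x + y) z = c *: m x z + m y z) /\
  (forall (c : k) (x y z : A), m z (c *: x + y) = c *: m z x + m z y).

Definition nijenhuis_algebra (mu : A -> A -> A) (N : A -> A) : Prop :=
  [/\ is_bilin mu,
      (forall a b c, mu (mu a b) c = mu a (mu b c)),
      is_lin N &
      (forall a b, mu (N a) (N b) = N (mu (N a) b + mu a (N b) - N (mu a b)))].

(* Formal power series A[[t]] : coefficient sequences *)
Definition pser := nat -> A.

(* k[[t]]-linear extension of f_t = sum_i t^i f_i : (f_t x)_n = sum_{i+j=n} f_i (x_j) *)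
Definition ser_map (fs : nat -> A -> A) (x : pser) : pser :=
  fun n => \sum_(i < n.+1) fs i (x (n - i)%N).

(* k[[t]]-bilinear extension of mu_t = sum_i t^i mu_i *)
Definition ser_mul (ms : nat -> A -> A -> A) (x y : pser) : pser :=
  fun n => \sum_(i < n.+1) \sum_(j < (n - i).+1)
             ms i (x j) (y (n - i - j)%N).

Definition ser_add (x y : pser) : pser := fun n => x n + y n.
Definition ser_sub (x y : pser) : pser := fun n => x n - y n.

Definition formal_deformation (mu : A -> A -> A) (N : A -> A)
    (ms : nat -> A -> A -> A) (Ns : nat -> A -> A) : Prop :=
  [/\ (forall a b, ms 0%N a b = mu a b),
      (forall a, Ns 0%N a = N a),
      (forall i, is_bilin (ms i) /\ is_lin (Ns i)),
      (forall x y z : pser, forall n,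
          ser_mul ms (ser_mul ms x y) z n = ser_mul ms x (ser_mul ms y z) n) &
      (forall x y : pser, forall n,
          ser_mul ms (ser_map Ns x) (ser_map Ns y) n =
          ser_map Ns (ser_sub (ser_add (ser_mul ms (ser_map Ns x) y)
                                       (ser_mul ms x (ser_map Ns y)))
                              (ser_map Ns (ser_mul ms x y))) n)].

Definition equivalent_deformations
    (ms : nat -> A -> A -> A) (Ns : nat -> A -> A)
    (ms' : nat -> A -> A -> A) (Ns' : nat -> A -> A) : Prop :=
  exists phis : nat -> A -> A,
    [/\ (forall a, phis 0%N a = a),
        (forall i, is_lin (phis i)),
        (forall x y : pser, forall n,
            ser_map phis (ser_mul ms x y) n =
            ser_mul ms' (ser_map phis x) (ser_map phis y) n) &
        (forall x : pser, forall n,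
            ser_map phis (ser_map Ns x) n = ser_map Ns' (ser_map phis x) n)].

Variables (mu : A -> A -> A) (N : A -> A).

Definition hoch1 (f : A -> A) (a b : A) : A :=
  mu a (f b) - f (mu a b) + mu (f a) b.

Definition hoch2 (chi : A -> A -> A) (a b c : A) : A :=
  mu a (chi b c) - chi (mu a b) c + chi a (mu b c) - mu (chi a b) c.

Definition partN1 (f : A -> A) (a : A) : A := f (N a) - N (f a).

Definition partN2 (chi : A -> A -> A) (a b : A) : A :=
  chi (N a) (N b) - N (chi a (N b)) - N (chi (N a) b) + N (N (chi a b)).

Definition dN1 (F : A -> A) (a b : A) : A :=
  mu (N a) (F b) + mu (F a) (N b)
  - F (mu (N a) b + mu a (N b) - N (mu a b))
  - N (hoch1 F a b).

Definition deltaNAlg1_fst (f : A -> A) : A -> A -> A := hoch1 f.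
Definition deltaNAlg1_snd (f : A -> A) : A -> A := fun a => - partN1 f a.

(* delta_NAlg on C^2: (chi, F) |-> (d_Hoch chi, d_N F + (-1)^2 partial^N chi) *)
Definition deltaNAlg2_fst (chi : A -> A -> A) (F : A -> A) : A -> A -> A -> A :=
  hoch2 chi.
Definition deltaNAlg2_snd (chi : A -> A -> A) (F : A -> A) : A -> A -> A :=
  fun a b => dN1 F a b + partN2 chi a b.

Definition NAlg_2cocycle (chi : A -> A -> A) (F : A -> A) : Prop :=
  [/\ is_bilin chi, is_lin F,
      (forall a b c, deltaNAlg2_fst chi F a b c = 0) &
      (forall a b, deltaNAlg2_snd chi F a b = 0)].

(* two 2-cochains differ by a coboundary delta_NAlg f, f in C^1
   (C^0 = 0, so this is equality of cohomology classes in H^2) *)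
Definition NAlg_cohomologous2 (chi : A -> A -> A) (F : A -> A)
    (chi' : A -> A -> A) (F' : A -> A) : Prop :=
  exists f : A -> A,
    [/\ is_lin f,
        (forall a b, chi' a b - chi a b = deltaNAlg1_fst f a b) &
        (forall a, F' a - F a = deltaNAlg1_snd f a)].

End NijenhuisDefs.

(* Main.v *)
From HB Require Import structures.
From mathcomp Require Import all_boot all_order all_algebra.
Import GRing.Theory.
Local Open Scope ring_scope.

Inductive ex := At of nat | Zr | Ad of ex & ex | Op of ex.

Section Ab.
Variable V : zmodType.
Fixpoint evx (env : seq V) (e : ex) : V :=
  match e with At i => nth 0 env i | Zr => 0 | Ad a b => evx env a + evx env b
  | Op a => - evx env a end.
Fixpoint coef (e : ex) (i : nat) : int :=
  match e with At j => (i == j)%:Z | Zr => 0 | Ad a b => coef a i + coef b i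
  | Op a => - coef a i end.
Fixpoint bnd (e : ex) : nat :=
  match e with At j => j.+1 | Zr => 0%N | Ad a b => maxn (bnd a) (bnd b) | Op a => bnd a end.

Lemma evx_coef env e n : (bnd e <= n)%N ->
  evx env e = \sum_(i < n) nth 0 env i *~ coef e i.
Proof.
elim: e => [j|| a IHa b IHb | a IHa] /=.
- move=> hj; rewrite (bigD1 (Ordinal hj)) //= eqxx mulr1z big1 ?addr0 //.
  by move=> i; rewrite -val_eqE /= => /negbTE ->; rewrite mulr0z.
- by move=> _; rewrite big1 // => i _; rewrite mulr0z.
- rewrite geq_max => /andP[ha hb]; rewrite IHa // IHb // -big_split /=.
  by apply: eq_bigr => i _; rewrite mulrzDr.
- by move=> h; rewrite IHa // -sumrN; apply: eq_bigr => i _; rewrite mulrNz.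
Qed.

Definition chk (e1 e2 : ex) : bool :=
  all (fun i => coef e1 i == coef e2 i) (iota 0 (maxn (bnd e1) (bnd e2))).

Lemma chk_ok env e1 e2 : chk e1 e2 -> evx env e1 = evx env e2.
Proof.
move=> /allP h.
rewrite (@evx_coef env e1 (maxn (bnd e1) (bnd e2))) ?leq_maxl //.
rewrite (@evx_coef env e2 (maxn (bnd e1) (bnd e2))) ?leq_maxr //.
apply: eq_bigr => i _; rewrite (eqP (h i _)) // mem_iota /=; exact: ltn_ord.
Qed.
End Ab.
Arguments evx {V}.

Ltac lfind x l :=
  lazymatch l with
  | nil => constr:(@None nat)
  | (?y :: ?l')%SEQ =>
      match y with
      | x => constr:(Some 0%N)
      | _ => let r := lfind x l' in
             lazymatch r with
             | Some ?n => constr:(Some n.+1)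
             | None => constr:(@None nat)
             end
      end
  end.

Ltac llen l :=
  lazymatch l with
  | nil => constr:(0%N)
  | (_ :: ?l')%SEQ => let r := llen l' in constr:(r.+1)
  end.

Ltac lapp l t :=
  lazymatch l with
  | nil => constr:([:: t])
  | (?y :: ?l')%SEQ => let r := lapp l' t in constr:((y :: r)%SEQ)
  end.

Ltac reify env t :=
  lazymatch t with
  | (?a + ?b)%R =>
      let r1 := reify env a in lazymatch r1 with (?e1, ?env1) =>
      let r2 := reify env1 b in lazymatch r2 with (?e2, ?env2) => constr:((Ad e1 e2, env2)) end end
  | (- ?a)%R =>
      let r1 := reify env a in lazymatch r1 with (?e1, ?env1) => constr:((Op e1, env1)) end
  | 0%R => constr:((Zr, env))
  | _ => let r := lfind t env in
         lazymatch r with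
         | Some ?n => constr:((At n, env))
         | None => let n := llen env in
                let env' := lapp env t in constr:((At n, env'))
         end
  end.

Ltac abel :=
  match goal with
  | |- ?L = ?R =>
    let T := type of L in
    let r1 := reify (@nil T) L in lazymatch r1 with (?e1, ?env1) =>
    let r2 := reify env1 R in lazymatch r2 with (?e2, ?env2) =>
            change (evx env2 e1 = evx env2 e2); apply: chk_ok; vm_compute; reflexivity
    end end
  end.

Ltac fin E :=
  first [ move: E => /eqP; rewrite -subr_eq0 => /eqP E; rewrite -E; abel
        | move: E => /esym/eqP; rewrite -subr_eq0 => /eqP E; rewrite -E; abel ].

Require Import Defs.
Set Implicit Arguments.

Section S.
Variables (k : fieldType) (A : lmodType k).
Definition dl (a : A) : pser A := fun n => if n is 0%N then a else 0.

Lemma sm0 (ms : nat -> A -> A -> A) x y :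
  ser_mul ms x y 0%N = ms 0%N (x 0%N) (y 0%N).
Proof. by rewrite /ser_mul !big_ord_recl !big_ord0 /= !addr0. Qed.

Lemma sm1 (ms : nat -> A -> A -> A) x y :
  ser_mul ms x y 1%N = ms 0%N (x 0%N) (y 1%N) + ms 0%N (x 1%N) (y 0%N) + ms 1%N (x 0%N) (y 0%N).
Proof. by rewrite /ser_mul !big_ord_recl !big_ord0 /= !addr0 ?addrA. Qed.

Lemma sp0 (fs : nat -> A -> A) x : ser_map fs x 0%N = fs 0%N (x 0%N).
Proof. by rewrite /ser_map !big_ord_recl !big_ord0 /= !addr0. Qed.

Lemma sp1 (fs : nat -> A -> A) x : ser_map fs x 1%N = fs 0%N (x 1%N) + fs 1%N (x 0%N).
Proof. by rewrite /ser_map !big_ord_recl !big_ord0 /= !addr0. Qed.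

Lemma lin0 (f : A -> A) : is_lin f -> f 0 = 0.
Proof. move=> h; have := h 1 0 0; rewrite !scale1r addr0 => /esym/eqP; rewrite -subr_eq0 addrK => /eqP. by []. Qed.

Lemma linD (f : A -> A) : is_lin f -> forall x y, f (x + y) = f x + f y.
Proof. by move=> h x y; have := h 1 x y; rewrite !scale1r. Qed.

Lemma linN (f : A -> A) : is_lin f -> forall x, f (- x) = - f x.
Proof.
move=> h x; have := h (-1 : k) x 0; rewrite !addr0 !scaleN1r (lin0 h) addr0.
done.
Qed.

Lemma bil0l (m : A -> A -> A) : is_bilin m -> forall z, m 0 z = 0.
Proof. move=> [h _] z; have := h 1 0 0 z; rewrite !scale1r addr0 => /esym/eqP; rewrite -subr_eq0 addrK => /eqP. by []. Qed.

Lemma bil0r (m : A -> A -> A) : is_bilin m -> forall z, m z 0 = 0.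
Proof. move=> [_ h] z; have := h 1 0 0 z; rewrite !scale1r addr0 => /esym/eqP; rewrite -subr_eq0 addrK => /eqP. by []. Qed.
Lemma bilNl (m : A -> A -> A) : is_bilin m -> forall x z, m (- x) z = - m x z.
Proof.
move=> hm x z; have := hm.1 (-1 : k) x 0 z; rewrite !addr0 !scaleN1r (bil0l hm) addr0.
done.
Qed.

Lemma bilNr (m : A -> A -> A) : is_bilin m -> forall x z, m z (- x) = - m z x.
Proof.
move=> hm x z; have := hm.2 (-1 : k) x 0 z; rewrite !addr0 !scaleN1r (bil0r hm) addr0.
done.
Qed.
End S.
Arguments dl {k A}.

Theorem theorem4p1 (k : fieldType) (chark : [pchar k] =i pred0)
    (A : lmodType k) (mu : A -> A -> A) (N : A -> A)
    (HNA : nijenhuis_algebra mu N) :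
  (forall (ms : nat -> A -> A -> A) (Ns : nat -> A -> A),
      formal_deformation mu N ms Ns ->
      NAlg_2cocycle mu N (ms 1%N) (Ns 1%N)) /\
  (forall (ms : nat -> A -> A -> A) (Ns : nat -> A -> A)
          (ms' : nat -> A -> A -> A) (Ns' : nat -> A -> A),
      formal_deformation mu N ms Ns ->
      formal_deformation mu N ms' Ns' ->
      equivalent_deformations ms Ns ms' Ns' ->
      NAlg_cohomologous2 mu N (ms 1%N) (Ns 1%N) (ms' 1%N) (Ns' 1%N)).
Proof.
case: HNA => Hmu _ HN _.
split.
- move=> ms Ns [H0 HN0 Hl Has HNij].
  have b0l i z := bil0l (Hl i).1 z.
  have b0r i z := bil0r (Hl i).1 z.
  have l0 i := lin0 (Hl i).2.
  split; first exact: (Hl 1%N).1; first exact: (Hl 1%N).2.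
  + move=> a b c; have := Has (dl a) (dl b) (dl c) 1%N.
    rewrite !sm1 !sm0 /= !b0l !b0r !H0 !add0r !addr0 => E.
    rewrite /deltaNAlg2_fst /hoch2.
    fin E.
  + move=> a b; have := HNij (dl a) (dl b) 1%N.
    rewrite /ser_sub /ser_add !(sm1, sm0, sp1, sp0) /=.
    rewrite ?l0 ?b0l ?b0r ?H0 ?HN0 ?add0r ?addr0 => E.
    rewrite /deltaNAlg2_snd /dN1 /partN2 /hoch1.
    move: E; rewrite ?(linD HN, linN HN) => E.
    rewrite ?(linD HN, linN HN).
    fin E.
- move=> ms Ns ms' Ns' [H0 HN0 Hl _ _] [H0' HN0' Hl' _ _] [ph [Hp0 Hpl Hpm HpN]].
  have b0l i z := bil0l (Hl i).1 z.
  have b0r i z := bil0r (Hl i).1 z.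
  have l0 i := lin0 (Hl i).2.
  have b0l' i z := bil0l (Hl' i).1 z.
  have b0r' i z := bil0r (Hl' i).1 z.
  have l0' i := lin0 (Hl' i).2.
  have p0 i := lin0 (Hpl i).
  exists (fun a => - ph 1%N a); split.
  + by move=> c x y; rewrite Hpl opprD scalerN.
  + move=> a b; have := Hpm (dl a) (dl b) 1%N.
    rewrite !(sm1, sm0, sp1, sp0) /=.
    rewrite ?p0 ?l0 ?b0l ?b0r ?b0l' ?b0r' ?l0' ?H0 ?H0' ?Hp0 ?add0r ?addr0 => E.
    rewrite /deltaNAlg1_fst /hoch1 (bilNl Hmu) (bilNr Hmu).
    apply/eqP; rewrite -subr_eq0; apply/eqP. fin E.
  + move=> a; have := HpN (dl a) 1%N.
    rewrite !(sm1, sm0, sp1, sp0) /=.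
    rewrite ?p0 ?l0 ?b0l ?b0r ?b0l' ?b0r' ?l0' ?HN0 ?HN0' ?Hp0 ?add0r ?addr0 => E.
    rewrite /deltaNAlg1_snd /partN1 (linN HN).
    apply/eqP; rewrite -subr_eq0; apply/eqP. fin E.
Qed.
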